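(* For a nontrivial finite abelian $p$-group $A$ ($p$ prime) with exponent $p^d$, let $t(A)$ be the unique positive integer such that $A\cong \mathbb{Z}/p^{d_1}\mathbb{Z}\oplus\cdots\oplus\mathbb{Z}/p^{d_k}\mathbb{Z}\oplus(\mathbb{Z}/p^{d}\mathbb{Z})^{t(A)}$ with $d_1\le d_2\le\cdots\le d_k<d$. Then: (i) For every prime $p$, every nontrivial finite abelian $p$-group $A$ and every noncyclic finite $p$-group $B$, $1-p^{-t(A)p}\le \psi(A,B)\le 1$. (ii) There is a constant $C>0$ such that for every prime $p$, every nontrivial finite abelian $p$-group $A$ and every nontrivial finite cyclic $p$-group $B$, $\left|\psi(A,B)-\left(1-p^{-t(A)}\right)\right|\le C\,p^{-t(A)-1}$. In particular, there is a constant $C'>0$ such that $|\psi(A,B)-1|\le C'/p$ for every prime $p$, every nontrivial finite abelian $p$-group $A$ and every nontrivial finite $p$-group $B$.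
   Context: For a finite group $G$, the average order is $a(G)=\frac{1}{|G|}\sum_{g\in G}\mathrm{order}(g)$ and $m(G)$ denotes the maximum order of an element of $G$. For $p$-groups $A,B$, $\psi(A,B)=\frac{a(A\wr B)}{m(A)\,a(B)}$. For groups $A,B$, let $K=\prod_{b\in B}A$, on which $B$ acts by $x\cdot(\alpha_b)_b=(\alpha_{x^{-1}b})_b$ for $x\in B$; the wreath product $A\wr B$ is the semidirect product $K\rtimes B$ for this action. The paper's big-$O$ convention $g=O(f)$ means $|g|\le M|f|$ always, for a fixed constant $M$; this is what the constants $C$, $C'$ express. *)

(* Defs.v *)
From HB Require Import structures.
From mathcomp Require Import all_boot all_order all_algebra all_fingroup all_solvable.
Set Implicit Arguments. Unset Strict Implicit. Unset Printing Implicit Defensive.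
Import GRing.Theory Num.Theory.

Local Open Scope group_scope.

(* The (regular) wreath product aT wr bT = K ><| bT with K = {ffun bT -> aT},
   where x in bT acts on K by (x . k) b = k (x^-1 b), so that
   (k, x) * (l, y) = (k * (x . l), x * y). *)
Section Wreath.
Variables (aT bT : finGroupType).

Definition wreath_of := ({ffun bT -> aT} * bT)%type.
HB.instance Definition _ := Finite.on wreath_of.

Definition wr_act (x : bT) (k : {ffun bT -> aT}) : {ffun bT -> aT} :=
  [ffun b => k (x^-1 * b)].

Definition wr_mul (u v : wreath_of) : wreath_of :=
  ([ffun b => u.1 b * wr_act u.2 v.1 b], u.2 * v.2).
Definition wr_one : wreath_of := ([ffun => 1], 1).
Definition wr_inv (u : wreath_of) : wreath_of :=
  (wr_act u.2^-1 [ffun b => (u.1 b)^-1], u.2^-1).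

Lemma wr_mulA : associative wr_mul.
Proof.
move=> [k x] [l y] [m z]; rewrite /wr_mul /wr_act /=; congr (_, _); last first.
  by rewrite mulgA.
by apply/ffunP=> b; rewrite !ffunE /= mulgA invMg mulgA.
Qed.

Lemma wr_mul1 : left_id wr_one wr_mul.
Proof.
move=> [k x]; rewrite /wr_mul /wr_act /=; congr (_, _); last by rewrite mul1g.
by apply/ffunP=> b; rewrite !ffunE /= invg1 !mul1g.
Qed.

Lemma wr_mulV : left_inverse wr_one wr_inv wr_mul.
Proof.
move=> [k x]; rewrite /wr_mul /wr_act /=; congr (_, _); last by rewrite mulVg.
by apply/ffunP=> b; rewrite !ffunE /= mulVg.
Qed.

HB.instance Definition _ := Finite_isGroup.Build wreath_of wr_mulA wr_mul1 wr_mulV.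

End Wreath.

Notation "A 'wr' B" := (wreath_of A B) (at level 40) : type_scope.

Local Open Scope ring_scope.

Definition avg_order (gT : finGroupType) : rat :=
  (\sum_(g : gT) #[g]%g)%:R / #|gT|%:R.

Definition max_order (gT : finGroupType) : nat := \max_(g : gT) #[g]%g.

Definition psi (aT bT : finGroupType) : rat :=
  avg_order (aT wr bT) / ((max_order aT)%:R * avg_order bT).

Definition tA (aT : finGroupType) : nat :=
  count_mem (exponent [set: aT]) (abelian_type [set: aT]).

(* Main.v *)
Require Import Defs.
From HB Require Import structures.
From mathcomp Require Import all_boot all_order all_algebra all_fingroup all_solvable.
From mathcomp Require Import zify.
Import GRing.Theory Num.Theory.

Set Implicit Arguments. Unset Strict Implicit. Unset Printing Implicit Defensive.
Local Open Scope group_scope.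

Definition pw (aT bT : finGroupType) (k : {ffun bT -> aT}) (x : bT) (n : nat)
  : {ffun bT -> aT} := [ffun b => \prod_(i < n) k (x ^- i * b)].

Lemma wr_mulE (aT bT : finGroupType) (u v : aT wr bT) :
  u * v = ([ffun b => u.1 b * v.1 (u.2^-1 * b)], u.2 * v.2).
Proof. by rewrite /mulg /= /wr_mul /wr_act; congr (_, _); apply/ffunP=> b; rewrite !ffunE. Qed.

Lemma wr_oneE (aT bT : finGroupType) : (1 : aT wr bT) = ([ffun => 1], 1).
Proof. by []. Qed.

Lemma pw_exp (aT bT : finGroupType) (k : {ffun bT -> aT}) (x : bT) n :
  ((k, x) : aT wr bT) ^+ n = (pw k x n, x ^+ n).
Proof.
elim: n => [|n IH].
  rewrite expg0 wr_oneE; congr (_, _); apply/ffunP=> b; rewrite !ffunE.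
  by rewrite big_ord0.
rewrite expgS IH wr_mulE /=; congr (_, _); last by rewrite expgS.
apply/ffunP=> b; rewrite !ffunE big_ord_recl /= expg0 invg1 mul1g; congr (_ * _).
by apply: eq_bigr => i _; rewrite expgS invMg mulgA.
Qed.

Lemma cst_exp (aT bT : finGroupType) (f : {ffun bT -> aT}) n :
  ((f, 1%g) : aT wr bT) ^+ n = ([ffun b => f b ^+ n], 1).
Proof.
elim: n => [|n IH].
  by rewrite expg0 wr_oneE; congr (_, _); apply/ffunP=> b; rewrite !ffunE.
rewrite expgS IH wr_mulE /= mulg1; congr (_, _).
by apply/ffunP=> b; rewrite !ffunE invg1 mul1g expgS.
Qed.

Lemma order_wr (aT bT : finGroupType) (k : {ffun bT -> aT}) (x : bT) :
  #[((k, x) : aT wr bT)] = (#[x] * #[((pw k x #[x], 1%g) : aT wr bT)])%N.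
Proof.
set u := ((k, x) : aT wr bT).
have dv : #[x] %| #[u].
  have := expg_order u; rewrite /u pw_exp wr_oneE => -[_ h].
  by rewrite order_dvdn h.
have -> : ((pw k x #[x], 1%g) : aT wr bT) = u ^+ #[x] by rewrite /u pw_exp expg_order.
by rewrite orderXdiv // mulnC divnK.
Qed.
Definition upd (I V : finType) (k : {ffun I -> V}) (c : I) (a : V) : {ffun I -> V} :=
  [ffun b => if b == c then a else k b].

Lemma sum_upd (I V : finType) (F : {ffun I -> V} -> nat) (c : I) :
  (\sum_(k : {ffun I -> V}) \sum_(a : V) F (upd k c a) = #|V| * \sum_k F k)%N.
Proof.
pose h (q : {ffun I -> V} * V) := (upd q.1 c q.2, q.1 c).
have hK : involutive h.
  move=> [k a]; rewrite /h /=; congr (_, _); last by rewrite ffunE eqxx.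
  by apply/ffunP=> b; rewrite !ffunE; case: eqP => // ->.
rewrite pair_bigA /=.
transitivity (\sum_(q : {ffun I -> V} * V) F q.1)%N.
  rewrite (reindex_inj (inv_inj hK)); apply: eq_bigr => q _.
  by have /(congr1 (fun r => F r.1)) := hK q.
rewrite -(pair_bigA _ (fun k (a : V) => F k)) /= big_distrr /=; apply: eq_bigr => k _.
by rewrite sum_nat_const.
Qed.

Lemma card_sumb (T : finType) (R : pred T) : #|R| = (\sum_(t : T) (R t : nat))%N.
Proof.
rewrite -sum1_card big_mkcond /=; apply: eq_bigr => t _.
by rewrite unfold_in; case: (R t).
Qed.

Lemma count_step (I V : finType) (Q P : pred {ffun I -> V}) c w :
  (forall k a, P (upd k c a) = P k) ->
  (forall k, #|[pred a | Q (upd k c a)]| = w) ->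
  (#|[pred k | Q k && P k]| * #|V| = w * #|[pred k | P k]|)%N.
Proof.
move=> HP HQ; rewrite mulnC (card_sumb [pred k | Q k && P k]) (card_sumb [pred k | P k]).
rewrite -(sum_upd (fun k => ([pred k | Q k && P k] k : nat)) c) big_distrr /=.
apply: eq_bigr => k _.
transitivity (\sum_(a : V) (Q (upd k c a) : nat) * P k)%N.
  by apply: eq_bigr => a _; rewrite HP; case: (Q _); case: (P k).
by rewrite -big_distrl /= -card_sumb HQ mulnC.
Qed.

Lemma expg_neq1 (bT : finGroupType) (x : bT) j : 0 < j < #[x] -> x ^+ j != 1.
Proof.
case/andP=> j0 jx; apply/negP; rewrite -order_dvdn => /(dvdn_leq j0).
by rewrite leqNgt jx.
Qed.

Lemma pw_upd_same (aT bT : finGroupType) (k : {ffun bT -> aT}) (x c : bT) a :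
  pw (upd k c a) x #[x] c = a * \prod_(i < #[x].-1) k (x ^- i.+1 * c).
Proof.
have [n hn] : exists n, #[x] = n.+1 by exists #[x].-1; rewrite prednK.
rewrite ffunE hn /= big_ord_recl /= expg0 invg1 mul1g ffunE eqxx; congr (_ * _).
apply: eq_bigr => i _; rewrite ffunE; case: eqP => // H; exfalso.
have : x ^+ i.+1 != 1 by apply: expg_neq1; rewrite hn /= ltnS ltn_ord.
move/negP; apply; rewrite -eq_invg1; apply/eqP; apply: (mulIg c); by rewrite mul1g.
Qed.

Lemma pw_upd_other (aT bT : finGroupType) (k : {ffun bT -> aT}) (x c c' : bT) a :
  c \notin <[x]> :* c' -> pw (upd k c a) x #[x] c' = pw k x #[x] c'.
Proof.
move=> Hc; rewrite !ffunE; apply: eq_bigr => i _; rewrite ffunE.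
case: eqP => // H; case/negP: Hc.
by rewrite -H mem_rcoset mulgK groupV mem_cycle.
Qed.

Lemma count_seq (aT bT : finGroupType) (Om : {set aT}) (x : bT) (s : seq bT) :
  pairwise (fun c c' => c \notin <[x]> :* c') s ->
  (#|[pred k : {ffun bT -> aT} | all (fun c => pw k x #[x] c \in Om) s]|
     * #|aT| ^ size s = #|Om| ^ size s * #|{ffun bT -> aT}|)%N.
Proof.
elim: s => [|c s IH] /=.
  by move=> _; rewrite !expn0 muln1 mul1n; apply: eq_card => k; rewrite !inE.
case/andP=> Hc Hs.
rewrite expnS mulnA (@count_step _ _ (fun k => pw k x #[x] c \in Om)
   (fun k => all (fun c => pw k x #[x] c \in Om) s) c #|Om|).
- by rewrite -mulnA IH // expnS mulnA.
- move=> k a; apply: eq_in_all => c' Hc'; rewrite pw_upd_other //.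
  exact: (allP Hc).
move=> k; rewrite -(card_preimset Om (mulIg (\prod_(i < #[x].-1) k (x ^- i.+1 * c)))).
by apply: eq_card => a; rewrite !inE pw_upd_same.
Qed.
Lemma pw_shift (aT bT : finGroupType) (k : {ffun bT -> aT}) (x b : bT) :
  (forall a a' : aT, a * a' = a' * a) ->
  pw k x #[x] (x * b) = pw k x #[x] b.
Proof.
move=> comm; have [n hn] : exists n, #[x] = n.+1 by exists #[x].-1; rewrite prednK.
have e : x ^+ n * x = 1 by rewrite -expgSr -hn expg_order.
have ex : x ^- n = x by rewrite -[x ^+ n](mulgK x) e mul1g invgK.
rewrite !ffunE hn big_ord_recl big_ord_recr /= ex expg0 invg1 mul1g comm.
congr (_ * _); apply: eq_bigr => i _.
by rewrite expgS invMg -mulgA mulKg.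
Qed.

Lemma pw_pow (aT bT : finGroupType) (k : {ffun bT -> aT}) (x b : bT) j :
  (forall a a' : aT, a * a' = a' * a) ->
  pw k x #[x] (x ^+ j * b) = pw k x #[x] b.
Proof.
move=> comm; elim: j => [|j IH]; first by rewrite expg0 mul1g.
by rewrite expgS -mulgA pw_shift.
Qed.

Lemma pw_cyc (aT bT : finGroupType) (k : {ffun bT -> aT}) (x b : bT) :
  (forall a a' : aT, a * a' = a' * a) -> <[x]> = [set: bT] ->
  pw k x #[x] b = pw k x #[x] 1.
Proof.
move=> comm hx; have : b \in <[x]> by rewrite hx inE.
by case/cycleP=> j ->; rewrite -[x ^+ j]mulg1 pw_pow.
Qed.

Lemma repr_rcoset_id (bT : finGroupType) (x : bT) C :
  C \in rcosets <[x]> [set: bT] -> <[x]> :* repr C = C.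
Proof.
by case/rcosetsP=> z _ ->; apply/rcoset_eqP; apply: mem_repr_rcoset.
Qed.

Lemma reps_pairwise (bT : finGroupType) (x : bT) (l : seq {set bT}) :
  uniq l -> {subset l <= rcosets <[x]> [set: bT]} ->
  pairwise (fun c c' => c \notin <[x]> :* c') (map repr l).
Proof.
elim: l => [|C l IH] //= /andP[Cl ul] sub.
rewrite IH ?andbT //; last by move=> C' HC'; apply: sub; rewrite in_cons HC' orbT.
rewrite all_map; apply/allP => C' HC' /=; apply/negP => /rcoset_eqP h.
have HC : C \in rcosets <[x]> [set: bT] by apply: sub; rewrite in_cons eqxx.
have HC'' : C' \in rcosets <[x]> [set: bT] by apply: sub; rewrite in_cons HC' orbT.
move: h; rewrite !repr_rcoset_id // => eCC'.
by move: Cl; rewrite eCC' HC'.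
Qed.

Lemma exists_reps (bT : finGroupType) (p : nat) (x : bT) :
  prime p -> (p.-group [set: bT]) -> ~~ ([set: bT] \subset <[x]>) ->
  exists s : seq bT, size s = p /\ pairwise (fun c c' => c \notin <[x]> :* c') s.
Proof.
move=> pp pB nsub.
have i1 : 1 < #|[set: bT] : <[x]>| by rewrite indexg_gt1.
have ip : p <= #|[set: bT] : <[x]>|.
  have := dvdn_indexg [set: bT] <[x]>; rewrite (card_pgroup pB).
  case/(dvdn_pfactor _ _ pp) => j _ hj; move: i1; rewrite hj.
  case: j {hj} => [|j] //= _; rewrite expnS -{1}(muln1 p) leq_mul2l.
  by rewrite expn_gt0 prime_gt0 //= orbT.
exists (map repr (take p (enum (rcosets <[x]> [set: bT])))); split.
  by rewrite size_map size_takel // -cardE.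
apply: reps_pairwise; first by rewrite take_uniq // enum_uniq.
by move=> C /mem_take; rewrite mem_enum.
Qed.
Lemma A_facts (aT : finGroupType) (p : nat) :
  prime p -> p.-group [set: aT] -> abelian [set: aT] -> 1 < #|aT| ->
  exists d, [/\ 0 < d, exponent [set: aT] = (p ^ d)%N, max_order aT = (p ^ d)%N,
     #|aT| = (p ^ tA aT * #|[set a : aT | a ^+ (p ^ d.-1)%N == 1%g]|)%N & 0 < tA aT].
Proof.
move=> pp pA cA ntA.
set G := [set: aT]%G.
have [d hd] : exists d, exponent G = (p ^ d)%N.
  have := exponent_dvdn G; rewrite (card_pgroup pA).
  by case/(dvdn_pfactor _ _ pp) => j _ ->; exists j.
have p1 : 1 < p by apply: prime_gt1.
have d0 : 0 < d.
  case: d hd => // /eqP; rewrite expn0 -dvdn1 -trivg_exponent => /eqP h.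
  by move: ntA; rewrite -cardsT -/G h cards1.
have [w _ hw] := exponent_witness (abelian_nil cA).
have omax : max_order aT = (p ^ d)%N.
  apply/eqP; rewrite eqn_leq; apply/andP; split.
    apply/bigmax_leqP => g _; rewrite -hd dvdn_leq ?exponent_gt0 //.
    by apply: dvdn_exponent; rewrite inE.
  by rewrite -hd hw (leq_bigmax w).
set Om := [set a : aT | a ^+ (p ^ d.-1)%N == 1].
have cO n : abelian 'Ohm_n(G) by apply: abelianS (Ohm_sub n G) cA.
have OmE : 'Ohm_d.-1(G) = Om :> {set aT}.
  rewrite (OhmEabelian pA (cO _)); apply/setP => a; by rewrite !inE.
have OdE : 'Ohm_d(G) = G :> {set aT}.
  rewrite (OhmEabelian pA (cO _)); apply/setP => a; rewrite !inE /=.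
  by apply/eqP; rewrite -hd expg_exponent ?inE.
have [b defG tb] := abelian_structure cA.
have tE : tA aT = logn p #|'Ohm_d.-1.+1(G) : 'Ohm_d.-1(G)|.
  rewrite /tA -tb count_map -(count_logn_dprod_cycle _ _ defG) hd.
  apply: eq_in_count => y _ /=.
  have : #[y] %| (p ^ d)%N by rewrite -hd dvdn_exponent ?inE.
  case/(dvdn_pfactor _ _ pp) => e le ->; rewrite pfactorK // eqn_exp2l //.
  by rewrite eqn_leq le /= -{1}(prednK d0).
have sOG : 'Ohm_d.-1(G) \subset G by apply: Ohm_sub.
have [j hj] : exists j, #|G : 'Ohm_d.-1(G)| = (p ^ j)%N.
  have := dvdn_indexg G 'Ohm_d.-1(G); rewrite (card_pgroup pA).
  by case/(dvdn_pfactor _ _ pp) => j _ ->; exists j.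
have cardE' : #|aT| = (p ^ tA aT * #|Om|)%N.
  by rewrite tE prednK // OdE hj pfactorK // -hj -OmE mulnC Lagrange // cardsT.
have wO : w \notin Om.
  rewrite inE; apply: expg_neq1; rewrite -hw hd expn_gt0 prime_gt0 //=.
  by rewrite ltn_exp2l // prednK // leqnn.
have t0 : 0 < tA aT.
  rewrite lt0n; apply/negP => /eqP t0; move: cardE'; rewrite t0 expn0 mul1n => hc.
  have : Om = [set: aT] by apply/eqP; rewrite eqEcard subsetT cardsT hc leqnn.
  by move=> hO; move: wO; rewrite hO inE.
by exists d; split.
Qed.
Lemma cst_pow1 (aT bT : finGroupType) (f : {ffun bT -> aT}) n :
  (((f, 1) : aT wr bT) ^+ n == 1) = [forall b, f b ^+ n == 1].
Proof.
rewrite cst_exp wr_oneE; apply/eqP/forallP => [h b | h].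
  case: h => h; have := congr1 (fun g : {ffun bT -> aT} => g b) h.
  by rewrite !ffunE => ->.
by congr (_, _); apply/ffunP => b; rewrite !ffunE; apply/eqP.
Qed.

Lemma cst_order (aT bT : finGroupType) (p d : nat) (f : {ffun bT -> aT}) :
  prime p -> exponent [set: aT] = (p ^ d)%N -> 0 < d ->
  ([forall b, f b \in [set a : aT | a ^+ (p ^ d.-1)%N == 1]] ->
     #[((f, 1) : aT wr bT)] <= p ^ d.-1) /\
  (~~ [forall b, f b \in [set a : aT | a ^+ (p ^ d.-1)%N == 1]] ->
     #[((f, 1) : aT wr bT)] = (p ^ d)%N).
Proof.
move=> pp hd d0; split.
  move/forallP => h; apply: dvdn_leq; first by rewrite expn_gt0 prime_gt0.
  rewrite order_dvdn cst_pow1; apply/forallP => b; have := h b; by rewrite inE.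
move=> nb; have : #[((f, 1) : aT wr bT)] %| (p ^ d)%N.
  rewrite order_dvdn cst_pow1; apply/forallP => b.
  by rewrite -hd expg_exponent ?inE.
case/(dvdn_pfactor _ _ pp) => e le he; rewrite he; congr (_ ^ _)%N.
apply/eqP; rewrite eqn_leq le /=; rewrite leqNgt; apply/negP => lt.
case/negP: nb; apply/forallP => b; rewrite inE.
have : #[((f, 1) : aT wr bT)] %| (p ^ d.-1)%N.
  by rewrite he dvdn_exp2l // -ltnS prednK.
by rewrite order_dvdn cst_pow1 => /forallP.
Qed.

Definition OmS (aT : finGroupType) (p d : nat) : {set aT} :=
  [set a : aT | a ^+ (p ^ d.-1)%N == 1].

Definition badp (aT bT : finGroupType) (Om : {set aT}) (x : bT)
  : pred {ffun bT -> aT} := [pred k | [forall b, pw k x #[x] b \in Om]].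

Definition Tx (aT bT : finGroupType) (x : bT) : nat :=
  \sum_(k : {ffun bT -> aT}) #[((pw k x #[x], 1%g) : aT wr bT)].

Lemma Tx_bounds (aT bT : finGroupType) (p d : nat) (x : bT) :
  prime p -> exponent [set: aT] = (p ^ d)%N -> 0 < d ->
  [/\ (p ^ d * #|{ffun bT -> aT}| <= Tx aT x + p ^ d * #|badp (OmS aT p d) x|)%N,
      (Tx aT x + p ^ d * #|badp (OmS aT p d) x|
         <= p ^ d * #|{ffun bT -> aT}| + p ^ d.-1 * #|badp (OmS aT p d) x|)%N
    & (Tx aT x <= p ^ d * #|{ffun bT -> aT}|)%N].
Proof.
move=> pp hd d0.
set B := badp (OmS aT p d) x.
have e1 : (\sum_(k | ~~ B k) #[((pw k x #[x], 1%g) : aT wr bT)] = p ^ d * #|predC B|)%N.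
  rewrite (eq_bigr (fun _ => (p ^ d)%N)); last first.
    by move=> k hk; apply: (cst_order _ pp hd d0).2.
  by rewrite sum_nat_const mulnC; congr (_ * _)%N; apply: eq_card => k; rewrite !inE.
have e2 : (\sum_(k | B k) #[((pw k x #[x], 1%g) : aT wr bT)] <= p ^ d.-1 * #|B|)%N.
  apply: leq_trans (@leq_sum _ _ _ _ (fun _ => (p ^ d.-1)%N) _) _.
    by move=> k hk; apply: (cst_order _ pp hd d0).1.
  by rewrite sum_nat_const mulnC.
have e3 := cardC B.
have e4 : (p ^ d.-1 * #|B| <= p ^ d * #|B|)%N.
  by rewrite leq_mul2r leq_pexp2l ?prime_gt0 ?leq_pred ?orbT.
rewrite /Tx (bigID B) /= e1 -e3 mulnDr.
move: e2 e4; set A := (\sum_(k | B k) _)%N.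
move: (p ^ d * #|B|)%N (p ^ d.-1 * #|B|)%N (p ^ d * #|predC B|)%N => u v w.
move=> h1 h2; split; lia.
Qed.

Lemma beta_seq (aT bT : finGroupType) (Om : {set aT}) (x : bT) (s : seq bT) :
  pairwise (fun c c' => c \notin <[x]> :* c') s ->
  (#|badp Om x| * #|aT| ^ size s <= #|Om| ^ size s * #|{ffun bT -> aT}|)%N.
Proof.
move=> hs; rewrite -(count_seq Om hs) leq_mul2r; apply/orP; right.
apply: subset_leq_card; apply/subsetP => k; rewrite !inE => /forallP h.
by apply/allP => c _; apply: h.
Qed.

Lemma beta_cyc (aT bT : finGroupType) (Om : {set aT}) (x : bT) :
  (forall a a' : aT, a * a' = a' * a) -> <[x]> = [set: bT] ->
  (#|badp Om x| * #|aT| = #|Om| * #|{ffun bT -> aT}|)%N.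
Proof.
move=> comm hx; have := @count_seq aT bT Om x [:: 1] isT.
rewrite /= !expn1 => <-; congr (_ * _)%N; apply: eq_card => k; rewrite !inE andbT.
apply/forallP/idP => [h | h b]; first exact: h.
by rewrite (pw_cyc _ _ comm hx).
Qed.

Lemma sum_wr (aT bT : finGroupType) :
  (\sum_(g : aT wr bT) #[g] = \sum_(x : bT) #[x] * Tx aT x)%N.
Proof.
have -> : (\sum_(g : aT wr bT) #[g] =
    \sum_(q : {ffun bT -> aT} * bT) #[((q.1, q.2) : aT wr bT)])%N.
  by apply: eq_bigr => -[k x] _.
rewrite -(pair_bigA _ (fun k x => #[((k, x) : aT wr bT)])) /= exchange_big /=.
apply: eq_bigr => x _; rewrite /Tx big_distrr /=; apply: eq_bigr => k _.
by rewrite order_wr.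
Qed.

Lemma card_wr (aT bT : finGroupType) :
  #|{: aT wr bT}| = (#|{ffun bT -> aT}| * #|bT|)%N.
Proof. exact: card_prod. Qed.
From mathcomp Require Import ring lra.
Lemma sum_lin (I : finType) (f g h : I -> nat) a b c e :
  (forall i, a * f i + b * g i <= c * f i + e * h i)%N ->
  (a * \sum_i f i + b * \sum_i g i <= c * \sum_i f i + e * \sum_i h i)%N.
Proof.
move=> H; rewrite !big_distrr -!big_split /=; exact: leq_sum.
Qed.

Lemma comm_of (aT : finGroupType) : abelian [set: aT] ->
  forall a a' : aT, (a * a' = a' * a)%g.
Proof. by move=> cA a a'; apply: (centsP cA); rewrite inE. Qed.

Local Open Scope ring_scope.

Lemma psiE (aT bT : finGroupType) (m : nat) :
  max_order aT = m -> (0 < m)%N ->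
  psi aT bT = (\sum_(x : bT) #[x]%g * Tx aT x)%N%:R /
              (m * #|{ffun bT -> aT}| * \sum_(x : bT) #[x]%g)%N%:R.
Proof.
move=> hm m0; rewrite /psi /avg_order sum_wr card_wr hm !natrM.
have K0 : (#|{ffun bT -> aT}|%:R : rat) != 0.
  rewrite pnatr_eq0 -lt0n card_ffun expn_gt0; apply/orP; left.
  by apply/card_gt0P; exists 1%g.
have B0 : (#|bT|%:R : rat) != 0.
  by rewrite pnatr_eq0 -lt0n; apply/card_gt0P; exists 1%g.
have W0 : ((\sum_(x : bT) #[x]%g)%N%:R : rat) != 0.
  rewrite pnatr_eq0 -lt0n (bigD1 1%g) //= order1; lia.
have M0 : (m%:R : rat) != 0 by rewrite pnatr_eq0 -lt0n.
field; by rewrite K0 B0 W0 M0.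
Qed.

Lemma psi_noncyc (aT bT : finGroupType) (p : nat) :
  prime p -> (p.-group [set: aT])%g -> abelian [set: aT] -> (1 < #|aT|)%N ->
  (p.-group [set: bT])%g -> ~~ cyclic [set: bT] ->
  1 - ((p ^ (tA aT * p))%N%:R)^-1 <= psi aT bT /\ psi aT bT <= 1.
Proof.
move=> pp pA cA ntA pB ncB.
have [d [d0 hd hmax hcard t0]] := A_facts pp pA cA ntA.
set t := tA aT in hcard t0 *.
set K := #|{ffun bT -> aT}|.
set m := (p ^ d)%N in hd hmax *.
set Q := (p ^ (t * p))%N.
have m0 : (0 < m)%N by rewrite expn_gt0 prime_gt0.
have Q0 : (0 < Q)%N by rewrite expn_gt0 prime_gt0.
have Om0 : (0 < #|OmS aT p d|)%N.
  by apply/card_gt0P; exists 1%g; rewrite inE expg1n.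
have hx : forall x : bT, (m * K * Q * #[x]%g + 0 * (#[x]%g * Tx aT x)
     <= m * K * #[x]%g + Q * (#[x]%g * Tx aT x))%N.
  move=> x; have [h1 h2 h3] := Tx_bounds x pp hd d0.
  have ns : ~~ ([set: bT] \subset <[x]>%g).
    apply: contra ncB => h; apply/cyclicP; exists x.
    by apply/eqP; rewrite eqEsubset h subsetT.
  have [s [hs hpw]] := exists_reps pp pB ns.
  have hb := beta_seq (OmS aT p d) hpw.
  rewrite hs hcard expnMn -expnM -/Q in hb.
  have hb2 : (#|badp (OmS aT p d) x| * Q <= K)%N.
    move: hb; have O0 : (0 < #|OmS aT p d| ^ p)%N by rewrite expn_gt0 Om0.
    by rewrite mulnA [X in (_ <= X)%N]mulnC leq_pmul2r.
  have e : (m * K * Q <= m * K + Q * Tx aT x)%N by nia.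
  have := leq_mul e (leqnn #[x]%g); lia.
have S_le : (\sum_(x : bT) #[x]%g * Tx aT x <= m * K * \sum_(x : bT) #[x]%g)%N.
  rewrite big_distrr; apply: leq_sum => x _.
  have [_ _ h3] := Tx_bounds x pp hd d0; rewrite mulnC leq_mul2r h3; lia.
have lower := sum_lin hx.
rewrite mul0n addn0 in lower.
rewrite (psiE _ hmax m0).
set S := (\sum_(x : bT) #[x]%g * Tx aT x)%N in S_le lower *.
set W := (\sum_(x : bT) #[x]%g)%N in S_le lower *.
have W0 : (0 < W)%N by rewrite /W (bigD1 1%g) //= order1; lia.
have D0 : (0 < m * K * W)%N.
  rewrite !muln_gt0 m0 W0 /K card_ffun expn_gt0 andbT; apply/orP; left.
  by apply/card_gt0P; exists 1%g.
split.
  rewrite -subr_ge0.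
  have -> : (S%:R / (m * K * W)%N%:R - (1 - (Q%:R)^-1) : rat) =
            ((S * Q + m * K * W)%N%:R - (m * K * W * Q)%N%:R) / ((m * K * W)%N%:R * Q%:R).
    rewrite !natrM natrD natrM; field.
    by rewrite !pnatr_eq0 -!lt0n Q0 W0 m0 /=; move: D0; rewrite !muln_gt0 => /andP[/andP[_ ->] _].

  apply: divr_ge0; last by rewrite mulr_ge0 ?ler0n.
  rewrite subr_ge0 ler_nat; lia.
by rewrite ler_pdivrMr ?ltr0n // mul1r ler_nat.
Qed.
Lemma sumH (bT : finGroupType) (p : nat) :
  prime p -> (p.-group [set: bT])%g -> cyclic [set: bT] -> (1 < #|bT|)%N ->
  (\sum_(x : bT) (if #[x]%g == #|bT| then #[x]%g else #[x]%g * p)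
     <= 2 * \sum_(x : bT) #[x]%g)%N.
Proof.
move=> pp pB cB nB.
have [e he] : exists e, #|bT| = (p ^ e)%N.
  by exists (logn p #|[set: bT]|); rewrite -cardsT -(card_pgroup pB).
have p1 := prime_gt1 pp.
have e0 : (0 < e)%N by move: nB; rewrite he; case: e {he} => //; rewrite expn0.
have hle : forall x : bT, ((if #[x]%g == #|bT| then #[x]%g else #[x]%g * p) <= #|bT|)%N.
  move=> x; case: eqP => [-> // | ne].
  have : (#[x]%g %| #|[set: bT]%G|)%N by apply: order_dvdG; rewrite inE.
  rewrite cardsT he; case/(dvdn_pfactor _ _ pp) => j le hj.
  rewrite hj -expnSr leq_exp2l //; rewrite ltn_neqAle le andbT.
  by apply/eqP => ej; apply: ne; rewrite hj ej he.
have S1 : (\sum_(x : bT) (if #[x]%g == #|bT| then #[x]%g else #[x]%g * p)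
     <= #|bT| * #|bT|)%N.
  apply: (@leq_trans (\sum_(x : bT) #|bT|)); first by apply: leq_sum => x _; apply: hle.
  by rewrite sum_nat_const.
have [a ha] := cyclicP cB.
have oa : #[a]%g = #|bT| by rewrite orderE -ha cardsT.
have hG : #|[pred x : bT | #[x]%g == #|bT|]| = totient #|bT|.
  rewrite -oa totient_gen; apply: eq_card => x; rewrite !inE /generator -ha oa.
  apply/eqP/eqP => [h|h]; last by rewrite orderE -h cardsT.
  by apply/eqP; rewrite eq_sym eqEcard subsetT cardsT -orderE h leqnn.
have W_ge : (totient #|bT| * #|bT| <= \sum_(x : bT) #[x]%g)%N.
  rewrite (bigID [pred x : bT | #[x]%g == #|bT|]) /=.
  apply: leq_trans (leq_addr _ _).
  rewrite (eq_bigr (fun _ => #|bT|)); last by move=> x /eqP.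
  by rewrite sum_nat_const hG.
move: W_ge S1; rewrite he totient_pfactor //.
have pe : (p ^ e = p * p ^ e.-1)%N by rewrite -expnS prednK.
rewrite pe; move: (p ^ e.-1)%N => q.
have k : (p <= 2 * p.-1)%N by lia.
have := leq_mul k (leqnn (q * (p * q))).
move: (\sum_(x : bT) _)%N (\sum_(x : bT) #[x]%g)%N => H W.
nia.
Qed.
Lemma psi_cyc (aT bT : finGroupType) (p : nat) :
  prime p -> (p.-group [set: aT])%g -> abelian [set: aT] -> (1 < #|aT|)%N ->
  (p.-group [set: bT])%g -> cyclic [set: bT] -> (1 < #|bT|)%N ->
  0 <= psi aT bT - (1 - ((p ^ tA aT)%N%:R)^-1) /\
  psi aT bT - (1 - ((p ^ tA aT)%N%:R)^-1) <= 2 / ((p ^ tA aT * p)%N%:R).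
Proof.
move=> pp pA cA ntA pB cB nB.
have [d [d0 hd hmax hcard t0]] := A_facts pp pA cA ntA.
have comm := comm_of cA.
set t := tA aT in hcard t0 *.
set K := #|{ffun bT -> aT}|.
set m := (p ^ d)%N in hd hmax *.
set P := (p ^ t)%N in hcard *.
have m0 : (0 < m)%N by rewrite expn_gt0 prime_gt0.
have P0 : (0 < P)%N by rewrite expn_gt0 prime_gt0.
have p0 : (0 < p)%N by rewrite prime_gt0.
have Om0 : (0 < #|OmS aT p d|)%N.
  by apply/card_gt0P; exists 1%g; rewrite inE expg1n.
have hm' : m = (p ^ d.-1 * p)%N by rewrite -expnSr prednK.
have hlow : forall x : bT, (m * K * P * #[x]%g + 0 * (#[x]%g * Tx aT x)
     <= m * K * #[x]%g + P * (#[x]%g * Tx aT x))%N.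
  move=> x; have [h1 h2 h3] := Tx_bounds x pp hd d0.
  have hb := @beta_seq aT bT (OmS aT p d) x [:: 1%g] isT.
  rewrite /= !expn1 hcard mulnA [X in (_ <= X)%N]mulnC leq_pmul2r // in hb.
  have e : (m * K * P <= m * K + P * Tx aT x)%N by nia.
  have := leq_mul e (leqnn #[x]%g); lia.
have hup : forall x : bT, (m * K * p * #[x]%g + p * P * (#[x]%g * Tx aT x)
     <= m * K * p * P * #[x]%g
        + m * K * (if #[x]%g == #|bT| then #[x]%g else #[x]%g * p))%N.
  move=> x; have [h1 h2 h3] := Tx_bounds x pp hd d0.
  case: eqP => hg.
    have hx : <[x]>%g = [set: bT].
      by apply/eqP; rewrite eqEcard subsetT cardsT -orderE hg leqnn.
    have hbe := beta_cyc (OmS aT p d) comm hx.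
    rewrite hcard mulnA [X in _ = X]mulnC in hbe.
    have hbP := @eqn_pmul2r _ (#|badp (OmS aT p d) x| * P) K Om0.
    rewrite hbe eqxx in hbP; move/esym/eqP: hbP => hbP.
    have E := leq_mul h2 (leqnn (p * P)).
    have e : (Tx aT x * (p * P) + m * K * p <= m * K * p * P + m * K)%N.
      rewrite -hbP hm' in E *; lia.
    have := leq_mul e (leqnn #[x]%g); lia.
  have := leq_mul h3 (leqnn (p * P * #[x]%g)); lia.
have lower := sum_lin hlow.
have upper := sum_lin hup.
have hH := sumH pp pB cB nB.
rewrite mul0n addn0 in lower.
rewrite (psiE _ hmax m0).
set S := (\sum_(x : bT) #[x]%g * Tx aT x)%N in lower upper *.
set W := (\sum_(x : bT) #[x]%g)%N in lower upper hH *.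
set H := (\sum_(x : bT) _)%N in hH upper.
have W0 : (0 < W)%N by rewrite /W (bigD1 1%g) //= order1; lia.
have K0 : (0 < K)%N.
  by rewrite /K card_ffun expn_gt0; apply/orP; left; apply/card_gt0P; exists 1%g.
have D0 : (0 < m * K * W)%N by rewrite !muln_gt0 m0 K0 W0.
have nz : forall n : nat, (0 < n)%N -> (n%:R : rat) != 0.
  by move=> n n0; rewrite pnatr_eq0 -lt0n.
split.
  have -> : (S%:R / (m * K * W)%N%:R - (1 - (P%:R)^-1) : rat) =
            ((S * P + m * K * W)%N%:R - (m * K * W * P)%N%:R) / ((m * K * W)%N%:R * P%:R).
    rewrite !natrM natrD natrM; field.
    by rewrite !nz.
  apply: divr_ge0; last by rewrite mulr_ge0 ?ler0n.
  rewrite subr_ge0 ler_nat; lia.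
have -> : (S%:R / (m * K * W)%N%:R - (1 - (P%:R)^-1) : rat) =
   2 / (P * p)%N%:R -
   ((m * K * W * P * p + 2 * (m * K * W))%N%:R - (S * P * p + m * K * W * p)%N%:R)
     / ((m * K * W)%N%:R * P%:R * p%:R).
  rewrite !natrM !natrD !natrM; field.
  by rewrite !nz.
rewrite gerBl; apply: divr_ge0; last by rewrite !mulr_ge0 ?ler0n.
rewrite subr_ge0 ler_nat.
have : (m * K * H <= m * K * (2 * W))%N by rewrite leq_mul2l hH orbT.
lia.
Qed.

Lemma inv_le (n p : nat) : (0 < p)%N -> (p <= n)%N -> ((n%:R : rat)^-1 <= (p%:R)^-1).
Proof.
move=> p0 le; rewrite lef_pV2 ?posrE ?ltr0n ?ler_nat //.
exact: leq_trans le.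
Qed.

Theorem theorem6 :
  (* (i) *)
  (forall (p : nat) (aT bT : finGroupType),
     prime p ->
     (p.-group [set: aT])%g -> abelian [set: aT] -> (1 < #|aT|)%N ->
     (p.-group [set: bT])%g -> ~~ cyclic [set: bT] ->
     1 - (p%:R : rat) ^- (tA aT * p) <= psi aT bT /\ psi aT bT <= 1)
  /\
  (* (ii) *)
  (exists C : rat, 0 < C /\
     forall (p : nat) (aT bT : finGroupType),
       prime p ->
       (p.-group [set: aT])%g -> abelian [set: aT] -> (1 < #|aT|)%N ->
       (p.-group [set: bT])%g -> cyclic [set: bT] -> (1 < #|bT|)%N ->
       `|psi aT bT - (1 - (p%:R : rat) ^- tA aT)| <= C * (p%:R : rat) ^- (tA aT).+1)
  /\
  (* consequence *)
  (exists C' : rat, 0 < C' /\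
     forall (p : nat) (aT bT : finGroupType),
       prime p ->
       (p.-group [set: aT])%g -> abelian [set: aT] -> (1 < #|aT|)%N ->
       (p.-group [set: bT])%g -> (1 < #|bT|)%N ->
       `|psi aT bT - 1| <= C' / p%:R).
Proof.
split; [|split].
- move=> p aT bT pp pA cA ntA pB ncB.
  by have := psi_noncyc pp pA cA ntA pB ncB; rewrite natrX.
- exists 2; split => // p aT bT pp pA cA ntA pB cB nB.
  have [h1 h2] := psi_cyc pp pA cA ntA pB cB nB.
  rewrite natrX in h1 h2; rewrite natrM natrX -exprSr in h2.
  by rewrite ger0_norm.
exists 3; split => // p aT bT pp pA cA ntA pB nB.
have [d [d0 hd hmax hcard t0]] := A_facts pp pA cA ntA.
have p0 : (0 < p)%N by rewrite prime_gt0.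
have q0 : 0 <= (p%:R : rat)^-1 by rewrite invr_ge0 ler0n.
case: (boolP (cyclic [set: bT])) => cB.
  have [h1 h2] := psi_cyc pp pA cA ntA pB cB nB.
  have hP : ((p ^ tA aT)%N%:R : rat)^-1 <= (p%:R)^-1.
    by apply: inv_le => //; rewrite -{1}(expn1 p) leq_exp2l ?prime_gt1.
  have hPp : ((p ^ tA aT * p)%N%:R : rat)^-1 <= (p%:R)^-1.
    by apply: inv_le => //; rewrite leq_pmull // expn_gt0 p0.
  have a0 : 0 <= ((p ^ tA aT)%N%:R : rat)^-1 by rewrite invr_ge0 ler0n.
  move: h1 h2 hP hPp a0.
  set a := ((p ^ tA aT)%N%:R : rat)^-1.
  set b := ((p ^ tA aT * p)%N%:R : rat)^-1.
  set q := (p%:R : rat)^-1.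
  set r := psi aT bT => h1 h2 hP hPp a0.
  have h2' : r - (1 - a) <= 2 * b by [].
  suff : `|r - 1| <= 3 * q by [].
  rewrite ler_norml; apply/andP; split; lra.
have [h1 h2] := psi_noncyc pp pA cA ntA pB cB.
have hQ : ((p ^ (tA aT * p))%N%:R : rat)^-1 <= (p%:R)^-1.
  apply: inv_le => //; rewrite -{1}(expn1 p) leq_exp2l ?prime_gt1 //.
  by rewrite muln_gt0 t0 p0.
move: h1 h2 hQ; set Q := ((p ^ (tA aT * p))%N%:R : rat)^-1.
set q := (p%:R : rat)^-1.
set r := psi aT bT => h1 h2 hQ.
suff : `|r - 1| <= 3 * q by [].
rewrite ler_norml; apply/andP; split; lra.
Qed.
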